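(* If $[\alpha]_{K\times K}\in\mathcal A_{\mathrm{SLS}}$, then for every $S\subseteq[K]$ there exists a p-optimal cyclic partition of $S$ containing at most one trivial cycle (cycle of length $1$).
   Context: SLS regime: $\mathcal A_{\mathrm{SLS}}=\{[\alpha]\in\mathbb R_+^{K\times K}:\ \alpha_{ii}\ge\max(\alpha_{ij},\alpha_{ki},\alpha_{ik}+\alpha_{ji}-\alpha_{jk})\ \forall i,j,k\in[K],\ i\notin\{j,k\}\}$. Cycles: a cycle $\pi=(i_1\to\cdots\to i_M)$, $M\ge1$, is an ordered list of distinct indices of $[K]$, read cyclically ($i_{M+1}=i_1$); $\{\pi\}$ its set; $\Pi$ the set of all cycles; a cycle of length $1$ is called trivial; a cyclic partition of $S$ is a collection of disjoint cycles whose sets have union $S$. $\delta_{ij}=\alpha_{ii}-\alpha_{ji}$ ($i\neq j$), $\delta_{ii}=0$; $\Delta_\pi=\sum_{m=1}^M\delta_{i_mi_{m+1}}$ if $M>1$, $\Delta_\pi=\alpha_{i_1i_1}$ if $M=1$. For $S\subseteq[K]$, $\mathcal D_{\mathrm{P\text{-}TIN}}(S)=\{(d_k)_{k\in[K]}: d_k=0\ (k\notin S),\ d_k\ge0\ (k\in S),\ \sum_{k\in\{\pi\}}d_k\le\Delta_\pi\ \forall \pi\in\Pi,\ \{\pi\}\subseteq S\}$ and $\mathcal D_{\Sigma,\mathrm{P\text{-}TIN}}(S)$ is the maximum of $\sum_{k\in S}d_k$ over it. A cyclic partition $\pi_1,\dots,\pi_n$ of $S$ is p-optimal if $\mathcal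 D_{\Sigma,\mathrm{P\text{-}TIN}}(S)=\sum_{l=1}^n\Delta_{\pi_l}$. *)

(* Defs.v *)
From HB Require Import structures.
From mathcomp Require Import all_boot all_order all_algebra.
Set Implicit Arguments. Unset Strict Implicit. Unset Printing Implicit Defensive.
Import Order.TTheory GRing.Theory Num.Theory.
Local Open Scope ring_scope.

Section Defs.
Variables (R : realFieldType) (K : nat).
Variable alpha : 'I_K -> 'I_K -> R.

Definition in_SLS : Prop :=
  (forall i j, 0 <= alpha i j) /\
  (forall i j k, i != j -> i != k ->
     Num.max (alpha i j) (Num.max (alpha k i) (alpha i k + alpha j i - alpha j k))
       <= alpha i i).

(* a cycle (i_1 -> ... -> i_M): a nonempty duplicate-free list read cyclically *)
Definition is_cycle (c : seq 'I_K) : bool := (0 < size c)%N && uniq c.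

Definition delta (i j : 'I_K) : R := if i == j then 0 else alpha i i - alpha j i.

Definition Delta (c : seq 'I_K) : R :=
  if c is [:: i] then alpha i i
  else \sum_(m <- c) delta m (next c m).

Definition in_DPTIN (S : {set 'I_K}) (d : 'I_K -> R) : Prop :=
  (forall k, k \notin S -> d k = 0) /\
  (forall k, k \in S -> 0 <= d k) /\
  (forall c : seq 'I_K, is_cycle c -> {subset c <= S} ->
     \sum_(k <- c) d k <= Delta c).

Definition is_DSigma (S : {set 'I_K}) (v : R) : Prop :=
  (exists2 d, in_DPTIN S d & \sum_(k in S) d k = v) /\
  (forall d, in_DPTIN S d -> \sum_(k in S) d k <= v).

Definition cyclic_partition (S : {set 'I_K}) (P : seq (seq 'I_K)) : Prop :=
  all is_cycle P /\ uniq (flatten P) /\ (forall k, (k \in flatten P) = (k \in S)).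

Definition p_optimal (S : {set 'I_K}) (P : seq (seq 'I_K)) : Prop :=
  cyclic_partition S P /\ is_DSigma S (\sum_(c <- P) Delta c).
End Defs.

(* Main.v *)
Require Import Defs.
From HB Require Import structures.
From mathcomp Require Import all_boot all_order all_algebra all_fingroup.
From mathcomp Require Import ring lra.
Import Order.TTheory GRing.Theory Num.Theory.
Local Open Scope ring_scope.

Section Proof5.
Variables (R : realFieldType) (K : nat) (alpha : 'I_K -> 'I_K -> R).
Hypothesis HS : in_SLS alpha.
Local Notation dl := (delta alpha).

Lemma a_ge0 i j : 0 <= alpha i j.
Proof. by case: HS. Qed.

Lemma a_le i j : i != j -> alpha j i <= alpha i i.
Proof.
move=> ij; case: HS => _ /(_ i j j ij ij).
by rewrite !ge_max => /and3P[].
Qed.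

Lemma a_le' i j : i != j -> alpha i j <= alpha i i.
Proof.
move=> ij; case: HS => _ /(_ i j j ij ij).
by rewrite !ge_max => /and3P[].
Qed.

Lemma dl_ge0 i j : 0 <= dl i j.
Proof.
rewrite /delta; case: eqP => [//|/eqP ij].
by rewrite subr_ge0 a_le.
Qed.

Lemma dl_le i j : dl i j <= alpha i i.
Proof.
rewrite /delta; case: eqP => [_|_]; first exact: a_ge0.
by rewrite lerBlDr lerDl a_ge0.
Qed.

Lemma dl_tri i j k : j != i -> j != k -> dl i k <= dl i j + dl j k.
Proof.
move=> ji jk; have [->|ik] := eqVneq i k.
  by rewrite {1}/delta eqxx addr_ge0 ?dl_ge0.
rewrite /delta (negbTE ik) eq_sym (negbTE ji) (negbTE jk).
case: HS => _ /(_ j k i jk ji); rewrite !ge_max => /and3P[_ _ h].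
rewrite -subr_ge0.
have -> : alpha i i - alpha j i + (alpha j j - alpha k j) - (alpha i i - alpha k i)
   = alpha j j - (alpha j i + alpha k j - alpha k i) by ring.
by rewrite subr_ge0.
Qed.

Lemma ex_min_seq (T : eqType) (P : pred T) (F : T -> R) (s : seq T) :
  has P s -> exists x, [/\ x \in s, P x & forall y, y \in s -> P y -> F x <= F y].
Proof.
elim: s => [|a s IH] //=.
have [Hs|Hs] := boolP (has P s).
  case: (IH Hs) => x [xs Px Hx] _.
  have [Pa|Pa] := boolP (P a).
    have [le|lt] := lerP (F x) (F a).
      exists x; split; rewrite ?inE ?xs ?orbT //.
      by move=> y; rewrite inE => /orP[/eqP->|/Hx//]; rewrite le.
    exists a; split; rewrite ?inE ?eqxx //.
    move=> y; rewrite inE => /orP[/eqP->//|ys Py].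
    by apply: le_trans (ltW lt) (Hx y ys Py).
  exists x; split; rewrite ?inE ?xs ?orbT //.
  by move=> y; rewrite inE => /orP[/eqP->|/Hx//]; rewrite (negbTE Pa).
rewrite orbF => Pa; exists a; split; rewrite ?inE ?eqxx //.
move=> y; rewrite inE => /orP[/eqP->//|ys Py].
by case/negP: Hs; apply/hasP; exists y.
Qed.

Lemma ex_min (T : finType) (P : pred T) (F : T -> R) x0 :
  P x0 -> exists x, P x /\ forall y, P y -> F x <= F y.
Proof.
move=> Px0; have /(@ex_min_seq _ _ F)[x [_ Px H]] : has P (enum T).
  by apply/hasP; exists x0; rewrite ?mem_enum.
by exists x; split=> // y; apply: H; rewrite mem_enum.
Qed.

Lemma bigmin_le (I : eqType) (r : seq I) (P : pred I) (F : I -> R) x0 :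
  \big[Num.min/x0]_(j <- r | P j) F j <= x0.
Proof.
elim: r => [|a r IH]; rewrite ?big_nil // big_cons.
by case: ifP => _; rewrite ?ge_min ?IH ?orbT.
Qed.

Lemma bigmin_le_F (I : eqType) (r : seq I) (P : pred I) (F : I -> R) x0 j :
  j \in r -> P j -> \big[Num.min/x0]_(j <- r | P j) F j <= F j.
Proof.
elim: r => [|a r IH] //; rewrite inE big_cons => /orP[/eqP<- ->|jr Pj].
  by rewrite ge_min lexx.
by case: ifP => _; rewrite ?ge_min IH ?orbT.
Qed.

Lemma bigmin_ge (I : eqType) (r : seq I) (P : pred I) (F : I -> R) x0 c :
  c <= x0 -> (forall j, P j -> c <= F j) ->
  c <= \big[Num.min/x0]_(j <- r | P j) F j.
Proof.
move=> h1 h2; elim: r => [|a r IH]; rewrite ?big_nil // big_cons.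
by case: ifP => Pa; rewrite ?le_min ?IH ?h2.
Qed.

Lemma bigmin_cases (I : eqType) (r : seq I) (P : pred I) (F : I -> R) x0 :
  let b := \big[Num.min/x0]_(j <- r | P j) F j in
  b = x0 \/ exists2 j, P j & b = F j.
Proof.
elim: r => [|a r IH] /=; rewrite ?big_nil ?big_cons; first by left.
case: ifP => // Pa; set b := \big[_/_]_(_ <- _ | _) _ in IH *.
have [le|lt] := lerP (F a) b.
  by right; exists a.
by [].
Qed.

Variable S : {set 'I_K}.

Definition beta i := \big[Num.min/alpha i i]_(j in S | j != i) (dl i j + dl j i).
Definition w i j := if i == j then beta i else dl i j.
Definition cost (s : {perm 'I_K}) := \sum_(x in S) w x (s x).

Lemma beta_ge0 i : 0 <= beta i.
Proof. by apply: bigmin_ge; rewrite ?a_ge0 // => j _; rewrite addr_ge0 ?dl_ge0. Qed.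

Lemma beta_le i : beta i <= alpha i i.
Proof. exact: bigmin_le. Qed.

Lemma beta_le2 i j : j \in S -> j != i -> beta i <= dl i j + dl j i.
Proof. by move=> jS ji; apply: bigmin_le_F; rewrite ?mem_index_enum ?jS. Qed.

Lemma beta_cases i : beta i = alpha i i \/ exists j, [/\ j \in S, j != i & beta i = dl i j + dl j i].
Proof.
case: (@bigmin_cases _ (index_enum 'I_K) (fun j => (j \in S) && (j != i))
   (fun j => dl i j + dl j i) (alpha i i)) => /= [h|[j /andP[h1 h2] h3]].
  by left.
by right; exists j.
Qed.

Lemma w_ge0 i j : 0 <= w i j.
Proof. rewrite /w; case: eqP => _; [exact: beta_ge0 | exact: dl_ge0]. Qed.

Lemma wtri k i l : i \in S -> (k == i) = (i == l) -> w k l <= w k i + w i l.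
Proof.
move=> iS; rewrite /w; have [->|ki] := eqVneq k i.
  move/esym/eqP<-; rewrite eqxx lerDl beta_ge0 //.
move=> /esym/negbT; rewrite eq_sym => il; rewrite ?(negbTE ki) ?(negbTE il) eq_sym ?(negbTE il).
have [->|kl] := eqVneq k l.
  by rewrite beta_le2 // eq_sym.
by rewrite dl_tri // eq_sym.
Qed.

Section Pot.
Variables (T : finType) (S0 : {set T}) (c : T -> T -> R).

Fixpoint pcs (s : seq T) : R :=
  match s with x :: ((y :: _) as t) => c x y + pcs t | _ => 0 end.

Lemma pcs_rcons x s y : pcs (rcons (x :: s) y) = pcs (x :: s) + c (last x s) y.
Proof.
elim: s x => [|z s IH] x /=; first by rewrite addr0 add0r.
have /= -> := IH z; by rewrite addrA.
Qed.

Lemma pcs_cat s1 y s2 : pcs (s1 ++ y :: s2) = pcs (rcons s1 y) + pcs (y :: s2).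
Proof.
elim: s1 => [|a s1 IH]; first by rewrite /= add0r.
case: s1 IH => [|b s1] IH; first by rewrite /= addr0.
by have /= -> := IH; rewrite /= addrA.
Qed.

Definition cyc (q : seq T) := \sum_(m <- q) c m (next q m).

Lemma pcs_fpath (f : T -> T) x l :
  fpath f x l -> pcs (x :: l) = \sum_(m <- belast x l) c m (f m).
Proof.
elim: l x => [|y l IH] x /=; first by rewrite big_nil.
case/andP=> /eqP fx hp; rewrite big_cons -IH // fx.
by case: l {IH hp}.
Qed.

Lemma cyc_pcs y l : uniq (y :: l) -> cyc (y :: l) = pcs (y :: l) + c (last y l) y.
Proof.
move=> U; have := cycle_next U; rewrite /cycle => /pcs_fpath.
rewrite belast_rcons /cyc => <-.
by rewrite -/(rcons (y :: l) y) pcs_rcons.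
Qed.

Fixpoint seqs n : seq (seq T) :=
  if n is n'.+1 then [::] :: [seq x :: s | x <- enum T, s <- seqs n'] else [:: [::]].

Lemma mem_seqs n s : (size s <= n)%N -> s \in seqs n.
Proof.
elim: n s => [|n IH] [|x s] //= hs; rewrite inE; apply/orP; right.
by apply/allpairsP; exists (x, s); rewrite mem_enum IH.
Qed.

Definition cand i (s : seq T) :=
  [&& uniq s, all (mem S0) s, s != [::] & last i s == i].

Definition pot i := \big[Num.min/0]_(s <- seqs #|T| | cand i s) pcs s.

Lemma pot_le i s : cand i s -> pot i <= pcs s.
Proof.
move=> cs; apply: bigmin_le_F => //; apply: mem_seqs.
case/and4P: cs => U _ _ _; rewrite -(card_uniqP U); exact: max_card.
Qed.

Lemma pot_cases i : i \in S0 -> exists s, cand i s /\ pot i = pcs s.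
Proof.
move=> iS; case: (@bigmin_cases _ (seqs #|T|) (cand i) pcs 0) => [h|[s cs h]].
  by exists [:: i]; rewrite /cand /= iS eqxx.
by exists s.
Qed.

Lemma potentials :
  (forall q, uniq q -> q != [::] -> {subset q <= S0} -> 0 <= cyc q) ->
  forall i k, i \in S0 -> k \in S0 -> pot i <= pot k + c k i.
Proof.
move=> Hc i k iS kS; case: (pot_cases _ kS) => s [cs ->].
case/and4P: cs => U AS sn /eqP ls.
have [is_|nis] := boolP (i \in s); last first.
  case: s U AS sn ls nis => [//|x s] U AS _ ls nis.
  apply: le_trans (pot_le i (rcons (x :: s) i) _) _.
    apply/and4P; split.
    - by rewrite rcons_uniq nis U.
    - by rewrite all_rcons AS andbT.
    - by rewrite -cats1.
    - by rewrite last_rcons.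
  by rewrite pcs_rcons; move: ls => /= ->.
case/splitPr: is_ U AS ls {sn} => p1 p2 U AS ls.
have c1 : cand i (rcons p1 i).
  rewrite /cand last_rcons eqxx andbT; apply/and3P; split.
  - rewrite cat_uniq in U; case/and3P: U => U1 U2 /andP[U3 _].
    by rewrite rcons_uniq U1 andbT; apply: contra U2 => ip1; apply/hasP; exists i; rewrite ?inE ?eqxx.
  - by rewrite all_cat /= in AS; rewrite all_rcons; case/and3P: AS => a1 a2 _; rewrite a1 andbT.
  - by case: (p1).
have := pot_le _ _ c1; rewrite pcs_cat => h.
have hq : 0 <= cyc (i :: p2).
  apply: Hc => //.
    by rewrite cat_uniq in U; case/and3P: U.
  move=> x xq; rewrite all_cat in AS; case/andP: AS => _ /allP; exact.
rewrite cyc_pcs in hq; last by rewrite cat_uniq in U; case/and3P: U.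
rewrite last_cat /= in ls; rewrite ls in hq.
apply: le_trans h _; rewrite -addrA lerDl //.
Qed.
End Pot.

Lemma perm_map_next (T : eqType) (q : seq T) : uniq q -> perm_eq (map (next q) q) q.
Proof.
move=> U; apply: uniq_perm => //.
  by rewrite map_inj_in_uniq // => x y _ _; apply: (can_inj (prev_next U)).
move=> x; apply/mapP/idP => [[y yq ->]|xq]; first by rewrite mem_next.
by exists (prev q x); rewrite ?mem_prev ?next_prev.
Qed.

Lemma sum_next (T : eqType) (q : seq T) (F : T -> R) : uniq q ->
  \sum_(m <- q) F (next q m) = \sum_(m <- q) F m.
Proof.
move=> U; have h := @perm_map_next _ _ U; rewrite perm_sym in h.
by rewrite [RHS](perm_big _ h) big_map.
Qed.

Lemma sum_perm_on (s : {perm 'I_K}) (F : 'I_K -> R) : perm_on S s ->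
  \sum_(x in S) F (s x) = \sum_(x in S) F x.
Proof.
move=> ps; rewrite big_mkcond [RHS]big_mkcond /=.
rewrite [RHS](reindex_inj (@perm_inj _ s)) /=.
by apply: eq_bigr => x _; rewrite (perm_closed _ ps).
Qed.

Lemma sum_in_seq (q : seq 'I_K) (h : 'I_K -> R) : uniq q -> {subset q <= S} ->
  (forall x, x \notin q -> h x = 0) -> \sum_(x in S) h x = \sum_(x <- q) h x.
Proof.
move=> U qS h0; rewrite (bigID (mem q)) /= [X in _ + X]big1 ?addr0; last first.
  by move=> x /andP[_ /h0].
rewrite big_uniq //; apply: eq_bigl => x /=; apply/andP/idP => [[]//|xq].
by split=> //; apply: qS.
Qed.

Lemma cyc_nonneg (s : {perm 'I_K}) : perm_on S s ->
  (forall t, perm_on S t -> cost s <= cost t) ->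
  forall q, uniq q -> q != [::] -> {subset q <= S} ->
  0 <= @cyc _ (fun k i => w i (s k) - w k (s k)) q.
Proof.
move=> ps smin q U _ qS.
have inj : injective (fun x => s (prev q x)).
  by move=> x y /perm_inj /(can_inj (next_prev U)).
set t := perm inj.
have tE x : t x = s (prev q x) by rewrite permE.
have pt : perm_on S t.
  apply/subsetP => x; rewrite inE; apply: contraR => xS.
  have xq : x \notin q by apply: contra xS; apply: qS.
  by rewrite tE prev_nth (negbTE xq) (out_perm ps xS).
have := smin t pt; rewrite -subr_ge0 /cost -sumrB.
rewrite (@sum_in_seq q) //; last first.
  by move=> x xq; rewrite tE prev_nth (negbTE xq) subrr.
rewrite /cyc big_split /= sumrB.
rewrite -(@sum_next _ q (fun x => w x (t x))) // sumrN.
by under eq_bigr do rewrite tE prev_next //.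
Qed.

Lemma next_neq (T : eqType) (c : seq T) m : uniq c -> m \in c -> (1 < size c)%N ->
  next c m != m.
Proof.
move=> U mc sc; case/rot_to: mc => i c' E.
rewrite -(next_rot i U) E.
have : uniq (m :: c') by rewrite -E rot_uniq.
have : (1 < size (m :: c'))%N by rewrite -E size_rot.
by case: c' {E} => [|y c''] //= _; rewrite eqxx inE negb_or => /andP[/andP[/negbTE ym _] _]; rewrite eq_sym ym.
Qed.

Definition orbs (s : {perm 'I_K}) :=
  [seq fingraph.orbit s x | x <- [seq x <- enum S | froots s x]].

Section Orbs.
Variable s : {perm 'I_K}.
Hypothesis ps : perm_on S s.

Lemma closedS : closed (frel s) S.
Proof. by move=> x y /eqP <-; rewrite (perm_closed _ ps). Qed.

Lemma symS : connect_sym (frel s).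
Proof. by move=> x y; apply: (fconnect_sym (@perm_inj _ s)). Qed.

Lemma mem_orbs y : (y \in flatten (orbs s)) = (y \in S).
Proof.
apply/flattenP/idP => [[c /mapP[x] ] | yS].
  rewrite mem_filter mem_enum => /andP[_ xS] -> yo.
  by rewrite -(closed_connect closedS (x := x) (y := y)) // fingraph.fconnect_orbit.
exists (fingraph.orbit s (froot s y)).
  apply: map_f; rewrite mem_filter mem_enum (roots_root symS) /=.
  by rewrite -(closed_connect closedS (connect_root _ y)).
by rewrite -fingraph.fconnect_orbit symS connect_root.
Qed.

Lemma uniq_orbs : uniq (flatten (orbs s)).
Proof.
rewrite /orbs; have : uniq [seq x <- enum S | froots s x] by rewrite filter_uniq ?enum_uniq.
have : all (froots s) [seq x <- enum S | froots s x] by apply: filter_all.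
elim: [seq x <- enum S | froots s x] => [|r rs IH] //= /andP[rr ar] /andP[nr ur].
rewrite cat_uniq fingraph.orbit_uniq IH // andbT; apply/hasP => -[y /flattenP[c /mapP[r' r'rs ->] yo'] yo].
move: yo yo'; rewrite -!fingraph.fconnect_orbit => /(fingraph.rootP symS) e1 /(fingraph.rootP symS) e2.
have rr' : r = r'.
  move/eqP: rr => <-; rewrite e1 -e2.
  by move/allP: ar => /(_ r' r'rs) /eqP.
by rewrite rr' r'rs in nr.
Qed.

Lemma orbit_fixed x : size (fingraph.orbit s x) = 1%N -> s x = x.
Proof.
case E: (fingraph.orbit s x) => [|a [|b l]] //= _.
have h1 : x \in fingraph.orbit s x := fingraph.in_orbit _ x.
have h2 : s x \in fingraph.orbit s x by apply: fingraph.mem_orbit.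
by rewrite E !inE in h1 h2; rewrite (eqP h2) (eqP h1).
Qed.

Lemma Delta_orbit x : (s x = x -> beta x = alpha x x) ->
  Delta alpha (fingraph.orbit s x) = \sum_(m <- fingraph.orbit s x) w m (s m).
Proof.
move=> hb; have U := fingraph.orbit_uniq s x; have cy := fingraph.cycle_orbit (@perm_inj _ s) x.
have [E|E] := eqVneq (size (fingraph.orbit s x)) 1%N.
  have fx := orbit_fixed _ E.
  have : fingraph.orbit s x = [:: x].
    case E': (fingraph.orbit s x) E => [|a [|b l]] //= _.
    have h1 : x \in fingraph.orbit s x := fingraph.in_orbit _ x.
    by rewrite E' inE in h1; rewrite (eqP h1).
  by move=> ->; rewrite /= big_seq1 fx /w eqxx hb.
have E2 : (1 < size (fingraph.orbit s x))%N.
  by rewrite ltn_neqAle eq_sym E /= lt0n size_eq0; apply/eqP => h; have := fingraph.in_orbit s x; rewrite h.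
have -> : Delta alpha (fingraph.orbit s x) = \sum_(m <- fingraph.orbit s x) dl m (next (fingraph.orbit s x) m).
  by move: E2; case: (fingraph.orbit s x) => [|a [|b l]].
rewrite big_seq [RHS]big_seq; apply: eq_bigr => m mo.
have ne := @next_neq _ _ _ U mo E2.
by rewrite (nextE cy mo) /w; rewrite (nextE cy mo) in ne; rewrite eq_sym (negbTE ne).
Qed.

Lemma count_orbs : (forall f j, f \in S -> j \in S -> s f = f -> s j = j -> f = j) ->
  (count (fun c => size c == 1%N) (orbs s) <= 1)%N.
Proof.
move=> hf; rewrite /orbs count_map.
have : uniq [seq x <- enum S | froots s x] by rewrite filter_uniq ?enum_uniq.
have : {subset [seq x <- enum S | froots s x] <= S}.
  by move=> x; rewrite mem_filter mem_enum => /andP[].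
elim: [seq x <- enum S | froots s x] => [|r rs IH] //= sub /andP[nr ur].
have sub' : {subset rs <= S} by move=> x xr; apply: sub; rewrite inE xr orbT.
have [h|h] := eqVneq (size (fingraph.orbit s r)) 1%N; last by rewrite add0n IH.
suff -> : count (preim [eta fingraph.orbit s] (fun c => size c == 1%N)) rs = 0%N by [].
apply/eqP; rewrite -leqn0 leqNgt -has_count; apply/hasP => -[y yr /= /eqP hy].
have := hf r y (sub r (mem_head _ _)) (sub' y yr) (orbit_fixed _ h) (orbit_fixed _ hy).
by move=> ry; rewrite ry yr in nr.
Qed.
End Orbs.

Lemma Delta_bound c : is_cycle c -> {subset c <= S} ->
  \sum_(m <- c) w m (next c m) <= Delta alpha c.
Proof.
case: c => [//|a [|b l]] cy sub.
  by rewrite /= big_seq1 /= eqxx /w eqxx beta_le.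
case/andP: cy => _ U.
have -> : Delta alpha [:: a, b & l] = \sum_(m <- [:: a, b & l]) dl m (next [:: a, b & l] m) by [].
rewrite big_seq [X in _ <= X]big_seq; apply: ler_sum => m mc.
have ne := @next_neq _ (a :: b :: l) m U mc isT.
by rewrite /w eq_sym (negbTE ne).
Qed.

Lemma upper_bound d P : in_DPTIN alpha S d -> cyclic_partition S P ->
  \sum_(k in S) d k <= \sum_(c <- P) Delta alpha c.
Proof.
move=> [_ [_ hd]] [AC [U M]].
have -> : \sum_(k in S) d k = \sum_(k <- flatten P) d k.
  by rewrite big_uniq //; apply: eq_bigl => k; rewrite /= M.
rewrite big_flatten /= big_seq [X in _ <= X]big_seq; apply: ler_sum => c cP.
apply: hd; first by move/allP: AC; apply.
by move=> k kc; rewrite -M; apply/flattenP; exists c.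
Qed.

Definition nfix (t : {perm 'I_K}) := #|[set x in S | t x == x]|.

Section Main.
Variable s : {perm 'I_K}.
Hypothesis ps : perm_on S s.
Hypothesis smin : forall t, perm_on S t -> cost s <= cost t.
Hypothesis sfix : forall t, perm_on S t -> cost t <= cost s -> (nfix s <= nfix t)%N.

Definition cc k i := w i (s k) - w k (s k).
Definition uu := @pot _ S cc.

Lemma Hu i k : i \in S -> k \in S -> uu i <= uu k + cc k i.
Proof. exact: (@potentials _ S cc (@cyc_nonneg s ps smin)). Qed.

Definition dd i := if i \in S then w (s^-1%g i) i + uu i - uu (s^-1%g i) else 0.

Lemma invS i : (s^-1%g i \in S) = (i \in S).
Proof. exact: (perm_closed _ (perm_onV ps)). Qed.

Lemma key m j : m \in S -> j \in S -> uu m + (w (s^-1%g j) j - uu (s^-1%g j)) <= w m j.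
Proof.
move=> mS jS; have := Hu _ _ mS (etrans (invS j) jS); rewrite /cc permKV => h.
rewrite -subr_ge0; rewrite -subr_ge0 in h.
by have -> : w m j - (uu m + (w (s^-1%g j) j - uu (s^-1%g j))) =
  uu (s^-1%g j) + (w m j - w (s^-1%g j) j) - uu m by ring.
Qed.

Lemma dd_ge0 i : 0 <= dd i.
Proof.
rewrite /dd; case: ifP => iS //.
set k := s^-1%g i.
have kS : k \in S by rewrite invS.
have lS : s i \in S by rewrite (perm_closed _ ps).
have := Hu _ _ kS iS; rewrite /cc => h.
have e : (k == i) = (i == s i).
  apply/eqP/eqP => [h1|h1]; first by rewrite -[in RHS]h1 /k permKV.
  by rewrite /k {1}h1 permK.
have := wtri _ _ _ iS e.
rewrite -subr_ge0; rewrite -subr_ge0 in h => h2.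
have -> : w k i + uu i - uu k = (w k i + w i (s i) - w k (s i)) + (uu i + (w k (s i) - w i (s i)) - uu k) by ring.
apply: addr_ge0 => //.
Qed.

Lemma dd_DPTIN : in_DPTIN alpha S dd.
Proof.
split; first by move=> k kS; rewrite /dd (negbTE kS).
split; first by move=> k _; apply: dd_ge0.
move=> c cc_ sub; apply: (le_trans _ (Delta_bound _ cc_ sub)).
case/andP: cc_ => _ U.
set v := fun j => w (s^-1%g j) j - uu (s^-1%g j).
have -> : \sum_(k <- c) dd k = \sum_(k <- c) uu k + \sum_(k <- c) v k.
  rewrite -big_split big_seq [RHS]big_seq; apply: eq_bigr => k kc.
  by rewrite /dd sub // /v /=; ring.
rewrite -(@sum_next _ c v U) -big_split /= big_seq [X in _ <= X]big_seq.
apply: ler_sum => m mc; apply: key; first exact: sub.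
by apply: sub; rewrite mem_next.
Qed.

Lemma dd_sum : \sum_(k in S) dd k = cost s.
Proof.
have -> : \sum_(k in S) dd k = \sum_(k in S) (fun x => w x (s x) + uu (s x) - uu x) (s^-1%g k).
  by apply: eq_bigr => k kS; rewrite /dd kS permKV.
rewrite (sum_perm_on _ (fun x => w x (s x) + uu (s x) - uu x) (perm_onV ps)).
rewrite sumrB big_split /= (sum_perm_on _ uu ps).
by rewrite /cost addrK.
Qed.

Lemma swap_contra f j : f \in S -> j \in S -> f != j -> s f = f ->
  w j f + w f (s j) <= w j (s j) + w f f -> False.
Proof.
move=> fS jS fj sf hw.
set t := (tperm f j * s)%g.
have tE x : t x = s (tperm f j x) by rewrite permM.
have pt : perm_on S t.
  apply: perm_onM ps; apply: subset_trans (tperm_on f j) _.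
  by apply/subsetP => x; rewrite !inE => /orP[] /eqP ->.
have sjf : s j != f by apply: contra fj => /eqP h; rewrite -sf in h; rewrite (perm_inj h).
have c1 : cost t <= cost s.
  rewrite -subr_ge0 /cost -sumrB.
  rewrite (@sum_in_seq [:: f; j]) //=; first last.
  - by move=> x; rewrite !inE negb_or => /andP[xf xj]; rewrite tE tpermD 1?eq_sym // subrr.
  - by move=> x; rewrite !inE => /orP[] /eqP ->.
  - by rewrite inE andbT.
  rewrite !big_cons big_nil addr0 !tE tpermL tpermR sf.
  lra.
have := sfix _ pt c1.
suff : (nfix t < nfix s)%N by move=> h1 h2; rewrite ltnNge h2 in h1.
apply: proper_card; apply/properP; split.
  apply/subsetP => x; rewrite !inE => /andP[xS /eqP tx]; rewrite xS /=.
  have [xf|xf] := eqVneq x f; first by rewrite xf tE tpermL in tx; rewrite tx eqxx in sjf.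
  have [xj|xj] := eqVneq x j; first by rewrite xj tE tpermR sf in tx; rewrite tx eqxx in fj.
  have e1 : f != x by rewrite eq_sym.
  have e2 : j != x by rewrite eq_sym.
  by rewrite -[X in _ == X]tx tE tpermD.
exists f; first by rewrite inE fS sf eqxx.
by rewrite inE fS tE tpermL /= sjf.
Qed.

Lemma beta_fix f : f \in S -> s f = f -> beta f = alpha f f.
Proof.
move=> fS sf; case: (beta_cases f) => // -[j [jS jf hb]].
exfalso; apply: (@swap_contra f j fS jS); rewrite 1?eq_sym //.
have wjf : w j f = dl j f by rewrite /w (negbTE jf).
have wff : w f f = beta f by rewrite /w eqxx.
rewrite wjf wff hb.
have [sj|sj] := eqVneq (s j) j.
  rewrite sj /w eqxx eq_sym (negbTE jf).
  have := beta_ge0 j; lra.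
have sjf : s j != f by apply: contra jf => /eqP h; rewrite -sf in h; rewrite (perm_inj h).
have e1 : (f == s j) = false by rewrite eq_sym (negbTE sjf).
have e2 : (j == s j) = false by rewrite eq_sym (negbTE sj).
rewrite /w e1 e2.
have sj_sym : j != s j by rewrite eq_sym.
have := dl_tri _ _ _ jf (sj_sym); lra.
Qed.

Lemma one_fix f j : f \in S -> j \in S -> s f = f -> s j = j -> f = j.
Proof.
move=> fS jS sf sj; apply/eqP; apply/negP => /negP fj.
apply: (@swap_contra f j fS jS fj sf).
rewrite sj /w eqxx (beta_fix _ jS sj) (beta_fix _ fS sf) eq_sym (negbTE fj).
rewrite eqxx.
have := dl_le j f; have := dl_le f j; lra.
Qed.

End Main.

Lemma main5 : exists P : seq (seq 'I_K),
  p_optimal alpha S P /\ (count (fun c => size c == 1%N) P <= 1)%N.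
Proof.
have [s0 [ps0 min0]] := @ex_min _ (fun t : {perm 'I_K} => perm_on S t) cost 1%g (perm_on1 S).
pose Q := fun t => perm_on S t && (cost t == cost s0).
have Qs0 : Q s0 by rewrite /Q ps0 eqxx.
case: (@arg_minnP _ s0 Q nfix Qs0) => s /andP[ps /eqP cs] smin2.
have smin : forall t, perm_on S t -> cost s <= cost t by move=> t pt; rewrite cs; apply: min0.
have sfix : forall t, perm_on S t -> cost t <= cost s -> (nfix s <= nfix t)%N.
  move=> t pt ct; apply: smin2; rewrite /Q pt /=.
  by apply/eqP; rewrite -cs; apply/le_anti; rewrite ct smin.
have cp : cyclic_partition S (orbs s).
  split; last split.
  - apply/allP => c /mapP[x _ ->]; rewrite /is_cycle fingraph.orbit_uniq andbT.
    by rewrite lt0n size_eq0; apply/eqP => h; have := fingraph.in_orbit s x; rewrite h.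
  - exact: uniq_orbs.
  - exact: mem_orbs.
exists (orbs s); split; last exact: (@count_orbs s (@one_fix s ps sfix)).
split => //; split.
  exists (dd s); first exact: (@dd_DPTIN s ps smin).
  rewrite dd_sum // /orbs big_map.
  have -> : \sum_(j <- [seq x <- enum S | froots s x]) Delta alpha (fingraph.orbit s j)
     = \sum_(j <- [seq x <- enum S | froots s x]) \sum_(m <- fingraph.orbit s j) w m (s m).
    rewrite big_seq [RHS]big_seq; apply: eq_bigr => x.
    rewrite mem_filter mem_enum => /andP[_ xS].
    by apply: Delta_orbit; apply: (@beta_fix s ps sfix x xS).
  rewrite -(big_map (fingraph.orbit s) xpredT (fun c => \sum_(m <- c) w m (s m))).
  rewrite -big_flatten /= -/(orbs s) big_uniq ?uniq_orbs //.
  by rewrite /cost; apply: eq_bigl => y; rewrite /= mem_orbs.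
by move=> d hd; apply: upper_bound hd cp.
Qed.

End Proof5.

Theorem lemma5 (R : realFieldType) (K : nat) (alpha : 'I_K -> 'I_K -> R) :
  in_SLS alpha ->
  forall S : {set 'I_K},
    exists P : seq (seq 'I_K),
      p_optimal alpha S P /\ (count (fun c => size c == 1%N) P <= 1)%N.
Proof. by move=> HS S; apply: main5. Qed.
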